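(* Let $v_1,\dots,v_m$ be nonzero vectors spanning $\mathbb{R}^n$ ($m\ge n$), let $c=(c_i)_{i=1}^m$ with $c_i>0$ and $\sum_i c_i=n$, and let $D_c=\inf\{\det(\sum_i\lambda_iv_i\otimes v_i)/\prod_i\lambda_i^{c_i};\ \lambda_i>0\}$. For $I\subset\{1,\dots,m\}$ with $|I|=n$ let $d_I=\det((v_i)_{i\in I})^2$. Then the infimum $D_c$ is attained at some $m$-tuple of positive numbers if and only if there exist non-negative numbers $(t_I)_{|I|=n}$ and positive numbers $(\lambda_i)_{i=1}^m$ such that $$c=\sum_{|I|=n}t_I1_I\qquad\text{and}\qquad t_I=d_I\prod_{i\in I}\lambda_i\ \text{ for all } I.$$
   Context: $1_I\in\mathbb{R}^m$ is the indicator vector of $I$; $v\otimes v=vv^T$; $\det((v_i)_{i\in I})$ is the determinant of the $n\times n$ matrix with columns $v_i$, $i\in I$ (its square does not depend on the ordering). *)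

(* Defs.v *)
From HB Require Import structures.
From mathcomp Require Import all_boot all_order all_algebra.
From mathcomp Require Import all_classical all_reals all_analysis.
Set Implicit Arguments. Unset Strict Implicit. Unset Printing Implicit Defensive.
Import Order.TTheory GRing.Theory Num.Theory.
Local Open Scope ring_scope.
Local Open Scope classical_set_scope.

Definition colmat (R : realType) (n m : nat) (v : 'I_m -> 'cV[R]_n) : 'M[R]_(n, m) :=
  \matrix_(j < n, i < m) v i j 0.

Definition Bfun (R : realType) (n m : nat) (v : 'I_m -> 'cV[R]_n) (c : 'I_m -> R)
  (lam : 'I_m -> R) : R :=
  \det (\sum_(i < m) lam i *: (v i *m (v i)^T)) / \prod_(i < m) (lam i `^ c i).

Definition Dc (R : realType) (n m : nat) (v : 'I_m -> 'cV[R]_n) (c : 'I_m -> R) : R :=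
  inf [set Bfun v c lam | lam in [set lam : 'I_m -> R | forall i, 0 < lam i]].

(* d_I = det((v_i)_{i in I})^2, the columns listed in increasing order of i
   (meaningful when #|I| = n) *)
Definition dI (R : realType) (n m : nat) (v : 'I_m -> 'cV[R]_n) (I : {set 'I_m}) : R :=
  (\det (\matrix_(j < n, k < n) (nth 0 [seq v i | i <- enum I] k) j 0)) ^+ 2.

(* Main.v *)
Require Import Defs.
From HB Require Import structures.
From mathcomp Require Import all_boot all_order all_algebra all_fingroup.
From mathcomp Require Import all_classical all_reals all_analysis.
From mathcomp Require Import lra ring.
Import Order.TTheory GRing.Theory Num.Theory.
Local Open Scope ring_scope.

Section Helpers.
Local Set Implicit Arguments. Local Unset Strict Implicit. Local Unset Printing Implicit Defensive.

Lemma cb_step1 (R : comNzRingType) N m (A : 'M[R]_(N, m)) (B : 'M[R]_(m, N)) :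
  \det (A *m B) = \sum_(f : {ffun 'I_N -> 'I_m})
     (\prod_i A i (f i)) * \det (\matrix_(i, j) B (f i) j).
Proof.
transitivity (\sum_(s : 'S_N) \sum_(f : {ffun 'I_N -> 'I_m})
   (-1) ^+ s * \prod_i (A i (f i) * B (f i) (s i))).
  apply: eq_bigr => s _; rewrite -big_distrr /=; congr (_ * _).
  rewrite -(bigA_distr_bigA (fun i k => A i k * B k (s i))) /=.
  by apply: eq_bigr => i _; rewrite mxE.
rewrite exchange_big; apply: eq_bigr => f _; rewrite big_distrr.
apply: eq_bigr => s _ /=; rewrite big_split /= mulrCA; congr (_ * (_ * _)).
by apply: eq_bigr => i _; rewrite mxE.
Qed.


Lemma cauchy_binet (R : comNzRingType) n m (x0 : 'I_m)
  (A : 'M[R]_(n.+1, m)) (B : 'M[R]_(m, n.+1)) :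
  \det (A *m B) = \sum_(I : {set 'I_m} | #|I| == n.+1)
     \det (\matrix_(j, k) A j (nth x0 (enum I) k)) *
     \det (\matrix_(k, j) B (nth x0 (enum I) k) j).
Proof.
rewrite cb_step1 (bigID (fun f : {ffun 'I_n.+1 -> 'I_m} => injectiveb f)) /=.
rewrite [X in _ + X]big1 ?addr0; last first.
  move=> f /injectivePn [i1 [i2 Di12 Ef12]].
  by rewrite (determinant_alternate Di12) ?mulr0 //= => j; rewrite !mxE Ef12.
rewrite (partition_big (fun f : {ffun 'I_n.+1 -> 'I_m} => [set f i | i in 'I_n.+1])
   (fun I : {set 'I_m} => #|I| == n.+1)) /=; last first.
  by move=> f /injectiveP injf; rewrite card_imset // card_ord.
apply: eq_bigr => I /eqP cardI.
have sz : size (enum I) = n.+1 by rewrite -cardE.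
pose g := fun k : 'I_n.+1 => nth x0 (enum I) k.
have ginj : injective g.
  move=> k1 k2 /eqP; rewrite /g nth_uniq ?sz ?enum_uniq //.
  by move/eqP/val_inj.
have gI : forall k, g k \in I.
  by move=> k; rewrite -mem_enum /g mem_nth ?sz.
pose h : 'S_n.+1 -> {ffun 'I_n.+1 -> 'I_m} := fun s => [ffun i => g (s i)].
pose h' := fun f : {ffun 'I_n.+1 -> 'I_m} =>
   insubd (1%g : 'S_n.+1) [ffun i => (inord (index (f i) (enum I)) : 'I_n.+1)].
rewrite (reindex h); last first.
  exists h' => [s _ | f /andP [/injectiveP injf /eqP imf]].
    apply: val_inj; rewrite /h' /= insubdK.
      apply/ffunP => i; rewrite /h !ffunE /g index_uniq ?sz ?enum_uniq // inord_val.
 by rewrite pvalE.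
    apply/injectiveP => i1 i2; rewrite !ffunE /g !index_uniq ?sz ?enum_uniq //.
    by move/(congr1 val); rewrite /= !inordK //; move/val_inj/perm_inj.
  have fI : forall i, f i \in enum I.
    by move=> i; rewrite mem_enum -imf; apply/imsetP; exists i.
  have idx : forall i, (index (f i) (enum I) < n.+1)%N.
    by move=> i; rewrite -[X in (_ < X)%N]sz index_mem.
  have hinj : injectiveb [ffun i => (inord (index (f i) (enum I)) : 'I_n.+1)].
    apply/injectiveP => i1 i2; rewrite !ffunE => /(congr1 val).
    rewrite /= !inordK //.
    by move/(congr1 (fun k => nth x0 (enum I) k)); rewrite !nth_index //; apply: injf.
  rewrite /h; apply/ffunP => i; rewrite ffunE /g /h'.
  have -> : (insubd (1%g : 'S_n.+1) [ffun i => (inord (index (f i) (enum I)) : 'I_n.+1)] i)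
     = (inord (index (f i) (enum I)) : 'I_n.+1).
    by rewrite -pvalE insubdK // ffunE.
  by rewrite inordK // nth_index.
rewrite (eq_bigl xpredT); last first.
  move=> s; apply/andP; split.
    apply/injectiveP => i1 i2; rewrite /h !ffunE => /ginj; exact: perm_inj.
  rewrite eqEcard; apply/andP; split.
    by apply/fintype.subsetP => y /imsetP [i _ ->]; rewrite /h ffunE.
  rewrite cardI card_imset ?card_ord //.
  by move=> i1 i2; rewrite /h !ffunE => /ginj; exact: perm_inj.
pose Bg := \matrix_(k, j) B (g k) j.
transitivity (\sum_(s : 'S_n.+1) ((-1) ^+ s * \prod_i A i (g (s i))) * \det Bg).
  apply: eq_bigr => s _.
  have -> : \matrix_(i, j) B (h s i) j = perm_mx s *m Bg.
    by rewrite -row_permE; apply/matrixP => i j; rewrite !mxE /h ffunE.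
  rewrite det_mulmx det_perm mulrA [_ * (-1) ^+ _]mulrC; congr (_ * _ * _).
  by apply: eq_bigr => i _; rewrite /h ffunE.
rewrite -big_distrl /=; congr (_ * _).
apply: eq_bigr => s _; congr (_ * _); apply: eq_bigr => i _; by rewrite mxE.
Qed.


Lemma det_P (R : realType) n m (x0 : 'I_m) (v : 'I_m -> 'cV[R]_n.+1) (lam : 'I_m -> R) :
  \det (\sum_(i < m) lam i *: (v i *m (v i)^T)) =
  \sum_(I : {set 'I_m} | #|I| == n.+1) dI v I * \prod_(i in I) lam i.
Proof.
pose A := \matrix_(j < n.+1, i < m) (lam i * v i j 0).
pose B := \matrix_(i < m, j < n.+1) v i j 0.
have -> : \sum_(i < m) lam i *: (v i *m (v i)^T) = A *m B.
  apply/matrixP => j k; rewrite !mxE summxE; apply: eq_bigr => i _.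
  by rewrite !mxE big_ord1 !mxE mulrA.
rewrite (cauchy_binet x0); apply: eq_bigr => I /eqP cI.
have sz : size (enum I) = n.+1 by rewrite -cardE.
pose MI := \matrix_(j < n.+1, k < n.+1) v (nth x0 (enum I) k) j 0.
have -> : \matrix_(j, k) A j (nth x0 (enum I) k) =
          MI *m diag_mx (\row_k lam (nth x0 (enum I) k)).
  by rewrite mul_mx_diag; apply/matrixP => j k; rewrite !mxE mulrC.
have -> : \matrix_(k, j) B (nth x0 (enum I) k) j = MI^T.
  by apply/matrixP => j k; rewrite !mxE.
rewrite det_mulmx det_tr det_diag.
have -> : dI v I = \det MI ^+ 2.
  rewrite /dI; congr (\det _ ^+ 2); apply/matrixP => j k; rewrite !mxE.
  by rewrite (nth_map x0) // sz.
have -> : \prod_(i in I) lam i = \prod_(k < n.+1) lam (nth x0 (enum I) k).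
  by rewrite -big_enum /= (big_nth x0) sz big_mkord.
rewrite expr2 -!mulrA; congr (_ * _).
rewrite mulrC; congr (_ * _); apply: eq_bigr => k _; by rewrite mxE.
Qed.


Lemma quad_form (R : realType) n m (v : 'I_m -> 'cV[R]_n) (lam : 'I_m -> R) (x : 'rV[R]_n) :
  (x *m (\sum_(i < m) lam i *: (v i *m (v i)^T)) *m x^T) 0 0
  = \sum_(i < m) lam i * ((x *m v i) 0 0) ^+ 2.
Proof.
rewrite mulmx_sumr mulmx_suml summxE; apply: eq_bigr => i _.
rewrite -scalemxAr -scalemxAl mxE; congr (_ * _).
rewrite !mulmxA -[_ *m _ *m x^T]mulmxA -trmx_mul mxE big_ord1 !mxE expr2 //.
Qed.

Lemma dI_ge0 (R : realType) n m (v : 'I_m -> 'cV[R]_n) I : 0 <= dI v I.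
Proof. by rewrite /dI sqr_ge0. Qed.

Lemma det_pos (R : realType) n m (x0 : 'I_m) (v : 'I_m -> 'cV[R]_n.+1) (lam : 'I_m -> R) :
  (forall i, 0 < lam i) -> \rank (colmat v) = n.+1 ->
  0 < \det (\sum_(i < m) lam i *: (v i *m (v i)^T)).
Proof.
move=> lam0 rk; rewrite lt0r; apply/andP; split; last first.
  rewrite (det_P x0); apply: sumr_ge0 => I _; apply: mulr_ge0; first exact: dI_ge0.
  by apply: prodr_ge0 => i _; exact: ltW.
apply/negP => /det0P [x xn0 xM].
have fr : row_free (colmat v) by rewrite /row_free rk.
have q0 : \sum_(i < m) lam i * ((x *m v i) 0 0) ^+ 2 = 0.
  by rewrite -quad_form xM mul0mx mxE.
have each : forall i, (x *m v i) 0 0 = 0.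
  move=> i; have := psumr_eq0P (fun j _ => mulr_ge0 (ltW (lam0 j)) (sqr_ge0 _)) q0 (i := i) isT.
  move=> /eqP.
  by rewrite mulf_eq0 gt_eqF //= sqrf_eq0 => /eqP.
have : x *m colmat v = 0.
  apply/matrixP => a i; rewrite (ord1 a) !mxE -[RHS](each i) mxE.
  by apply: eq_bigr => j _; rewrite mxE.
by move/eqP; rewrite (mulmx_free_eq0 _ fr) (negPf xn0).
Qed.


Lemma ln_le_sub1 (R : realType) (x : R) : 0 < x -> ln x <= x - 1.
Proof.
move=> x0; have := @le_ln1Dx R (x - 1); rewrite addrCA subrr addr0; apply; lra.
Qed.

Lemma ln_prodr (R : realType) (I : finType) (P : pred I) (F : I -> R) :
  (forall i, P i -> 0 < F i) ->
  ln (\prod_(i | P i) F i) = \sum_(i | P i) ln (F i).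
Proof.
move=> H.
suff [-> _] : \sum_(i | P i) ln (F i) = ln (\prod_(i | P i) F i) /\
              0 < \prod_(i | P i) F i by [].
apply: (big_rec2 (fun a b => a = ln b /\ 0 < b)); first by rewrite ln1 ltr01.
move=> i a b Pi [-> b0]; split; first by rewrite lnM ?posrE ?H.
by apply: mulr_gt0 => //; apply: H.
Qed.

Lemma ln_ge_1V (R : realType) (s : R) : 0 < s -> 1 - s^-1 <= ln s.
Proof.
move=> s0; have := @ln_le_sub1 R s^-1; rewrite invr_gt0 => /(_ s0).
by rewrite lnV ?posrE //; lra.
Qed.

Lemma key_q (R : realType) (q c : R) : 0 < c ->
  (forall s, 0 < s -> c * ln s <= (s - 1) * q) -> q = c.
Proof.
move=> c0 H.
have H' : forall s, 0 < s -> c * (s - 1) <= (s - 1) * q * s.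
  move=> s s0; have h1 := H s s0; have h2 := ln_ge_1V s0.
  have h3 : c * (1 - s^-1) <= (s - 1) * q.
    apply: le_trans h1; rewrite ler_pM2l //.
  have e : c * (s - 1) = c * (1 - s^-1) * s.
    by rewrite -mulrA mulrBl mul1r mulVf ?gt_eqF.
  by rewrite e ler_pM2r.
apply/eqP; rewrite eq_le; apply/andP; split.
  rewrite leNgt; apply/negP => cq.
  have q0 : 0 < q by lra.
  pose u := c / q.
  have uq : q * u = c by rewrite /u mulrC divfK ?gt_eqF.
  have u0 : 0 < u by rewrite /u divr_gt0.
  have u1 : u < 1 by rewrite /u ltr_pdivrMr // mul1r.
  have := H' ((1 + u) / 2) ltac:(lra).
  rewrite -uq; nra.
rewrite leNgt; apply/negP => qc.
have [q0|q0] := lerP q 0.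
  have := H' 2 ltac:(lra); nra.
pose u := c / q.
have uq : q * u = c by rewrite /u mulrC divfK ?gt_eqF.
have u1 : 1 < u by rewrite /u ltr_pdivlMr // mul1r.
have := H' ((1 + u) / 2) ltac:(lra).
rewrite -uq; nra.
Qed.


Lemma Bfun_pos (R : realType) n m (x0 : 'I_m) (v : 'I_m -> 'cV[R]_n.+1) c lam :
  \rank (colmat v) = n.+1 -> (forall i, 0 < lam i) -> 0 < Bfun v c lam.
Proof.
move=> rk lam0; rewrite /Bfun divr_gt0 ?(det_pos x0) //.
by apply: prodr_gt0 => i _; apply: powR_gt0.
Qed.

Lemma Bfun_ln (R : realType) n m (x0 : 'I_m) (v : 'I_m -> 'cV[R]_n.+1) c lam :
  \rank (colmat v) = n.+1 -> (forall i, 0 < lam i) ->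
  ln (Bfun v c lam) = ln (\det (\sum_(i < m) lam i *: (v i *m (v i)^T)))
                      - \sum_i c i * ln (lam i).
Proof.
move=> rk lam0; rewrite /Bfun ln_div ?posrE ?(det_pos x0) //; last first.
  by apply: prodr_gt0 => i _; apply: powR_gt0.
rewrite ln_prodr => [|i _]; last exact: powR_gt0.
by congr (_ - _); apply: eq_bigr => i _; rewrite ln_powR.
Qed.


Lemma sum_ind (R : realType) m (I : {set 'I_m}) :
  \sum_(i < m) ((i \in I)%:R : R) = #|I|%:R.
Proof.
rewrite (eq_bigr (fun i => if i \in I then 1 else 0)) => [|i _]; last by case: (i \in I).
by rewrite -big_mkcond sumr_const.
Qed.

Lemma main_pos (R : realType) (n m : nat) (v : 'I_m -> 'cV[R]_n.+1)
  (c : 'I_m -> R) :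
  (n.+1 <= m)%N ->
  \rank (colmat v) = n.+1 ->
  (forall i, 0 < c i) ->
  \sum_(i < m) c i = n.+1%:R ->
  (exists lam : 'I_m -> R, (forall i, 0 < lam i) /\ Bfun v c lam = Dc v c)
  <->
  (exists (t : {set 'I_m} -> R) (lam : 'I_m -> R),
      (forall i, 0 < lam i) /\
      (forall I : {set 'I_m}, #|I| = n.+1 -> 0 <= t I) /\
      (forall i, c i = \sum_(I : {set 'I_m} | #|I| == n.+1) t I * (i \in I)%:R) /\
      (forall I : {set 'I_m}, #|I| = n.+1 -> t I = dI v I * \prod_(i in I) lam i)).
Proof.
move=> nm rk c0 csum.
have m0 : (0 < m)%N by apply: leq_trans nm.
pose x0 := Ordinal m0.
pose Pd := fun lam : 'I_m -> R => \det (\sum_(i < m) lam i *: (v i *m (v i)^T)).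
have hlb : has_lbound [set Bfun v c lam | lam in [set lam : 'I_m -> R | forall i, 0 < lam i]].
  by exists 0 => y [lam lam0 <-]; apply: ltW; apply: (Bfun_pos x0).
split.
  move=> [lam [lam0 Blam]].
  have minB : forall mu, (forall i, 0 < mu i) -> Bfun v c lam <= Bfun v c mu.
    move=> mu mu0; rewrite Blam /Dc; apply: (ge_inf hlb); by exists mu.
  set P := Pd lam.
  have P0 : 0 < P by apply: (det_pos x0).
  have Cj : forall j, \sum_(I : {set 'I_m} | #|I| == n.+1)
      dI v I * \prod_(i in I) lam i * (j \in I)%:R = c j * P.
    move=> j; set C := LHS.
    suff <- : C / P = c j by rewrite divfK ?gt_eqF.
    apply: (key_q (c0 j)) => s s0.
    pose mu := fun i => lam i * (if i == j then s else 1).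
    have mu0 : forall i, 0 < mu i.
      by move=> i; rewrite /mu; apply: mulr_gt0 => //; case: (i == j).
    have Pmu : Pd mu = P + (s - 1) * C.
      rewrite /P /Pd !(det_P x0) /C big_distrr -big_split /=.
      apply: eq_bigr => I _; rewrite /mu big_split /=.
      have -> : \prod_(i in I) (if i == j then s else 1) = if j \in I then s else 1.
        case: (boolP (j \in I)) => jI.
          rewrite (bigD1 j) //= eqxx big1 ?mulr1 // => i /andP [_ /negPf ->] //.
        by rewrite big1 // => i iI; case: eqP => // eij; rewrite -eij iI in jI.
      by case: (j \in I) => /=; ring.
    have Q0 : 0 < Pd mu by apply: (det_pos x0).
    have := minB mu mu0.
    rewrite -ler_ln ?posrE ?(Bfun_pos x0) // !(Bfun_ln x0) //.
    have -> : \sum_i c i * ln (mu i) = \sum_i c i * ln (lam i) + c j * ln s.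
      rewrite (eq_bigr (fun i => c i * ln (lam i) + c i * ln (if i == j then s else 1)))
        => [|i _]; last first.
        by rewrite /mu lnM ?posrE // ?mulrDr //; case: (i == j).
      rewrite big_split /=; congr (_ + _).
      rewrite (bigD1 j) //= eqxx big1 ?addr0 // => i /negPf ->.
      by rewrite ln1 mulr0.
    rewrite -/(Pd lam) -/(Pd mu) -/P => h.
    have h2 : c j * ln s <= ln (Pd mu / P) by rewrite ln_div ?posrE //; lra.
    apply: (le_trans h2); apply: le_trans (ln_le_sub1 _) _; first by rewrite divr_gt0.
    rewrite Pmu mulrDl divff ?gt_eqF // addrAC subrr add0r mulrA //.
  pose k := P `^ (- (n.+1%:R)^-1).
  have k0 : 0 < k by apply: powR_gt0.
  have kN : k ^+ n.+1 * P = 1.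
    rewrite -powR_mulrn ?ltW // -powRrM mulNr mulVf ?pnatr_eq0 //.
    by rewrite powR_inv1 ?ltW // mulVf ?gt_eqF.
  exists (fun I => dI v I * \prod_(i in I) (k * lam i)), (fun i => k * lam i).
  split; first by move=> i; apply: mulr_gt0.
  split.
    move=> I _; apply: mulr_ge0; first exact: dI_ge0.
    by apply: prodr_ge0 => i _; apply: ltW; apply: mulr_gt0.
  split => // j.
  rewrite (eq_bigr (fun I => k ^+ n.+1 * (dI v I * \prod_(i in I) lam i * (j \in I)%:R)))
    => [|I /eqP cI]; last by rewrite big_split /= prodr_const cI; ring.
  by rewrite -big_distrr /= Cj mulrCA kN mulr1.
move=> [t [lam [lam0 [t0 [ct tdef]]]]].
exists lam; split => //.
have Pt : Pd lam = \sum_(I : {set 'I_m} | #|I| == n.+1) t I.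
  by rewrite /Pd (det_P x0); apply: eq_bigr => I /eqP cI; rewrite tdef.
have P1 : Pd lam = 1.
  have h : n.+1%:R * Pd lam = n.+1%:R :> R.
    rewrite -{2}csum (eq_bigr (fun i => \sum_(I : {set 'I_m} | #|I| == n.+1)
       t I * (i \in I)%:R)) // exchange_big /= Pt big_distrr /=.
    apply: eq_bigr => I /eqP cI; rewrite -big_distrr /= sum_ind cI mulrC //.
  by apply: (mulfI (x := n.+1%:R)); rewrite ?pnatr_eq0 // h mulr1.
have key : forall mu, (forall i, 0 < mu i) -> Bfun v c lam <= Bfun v c mu.
  move=> mu mu0.
  have Q0 : 0 < Pd mu by apply: (det_pos x0).
  rewrite -ler_ln ?posrE ?(Bfun_pos x0) // !(Bfun_ln x0) // -/(Pd lam) -/(Pd mu).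
  rewrite P1 ln1 sub0r.
  pose r := fun i => mu i / lam i.
  have r0 : forall i, 0 < r i by move=> i; rewrite divr_gt0.
  pose Y := fun I : {set 'I_m} => \prod_(i in I) r i.
  have Y0 : forall I, 0 < Y I by move=> I; apply: prodr_gt0.
  have hQ : Pd mu = \sum_(I : {set 'I_m} | #|I| == n.+1) t I * Y I.
    rewrite /Pd (det_P x0); apply: eq_bigr => I /eqP cI.
    rewrite tdef // -mulrA -big_split /=; congr (_ * _); apply: eq_bigr => i _.
    by rewrite /r mulrC divfK ?gt_eqF.
  have hb : \sum_(I : {set 'I_m} | #|I| == n.+1) t I * ln (Y I / Pd mu) <=
            \sum_(I : {set 'I_m} | #|I| == n.+1) t I * (Y I / Pd mu - 1).
    apply: ler_sum => I /eqP cI; apply: ler_wpM2l; first exact: t0.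
    by apply: ln_le_sub1; rewrite divr_gt0.
  have e1 : \sum_(I : {set 'I_m} | #|I| == n.+1) t I * ln (Y I / Pd mu) =
       \sum_(I : {set 'I_m} | #|I| == n.+1) t I * ln (Y I) - ln (Pd mu).
    rewrite -[ln (Pd mu)]mul1r -{1}P1 Pt big_distrl -sumrB /=.
    by apply: eq_bigr => I _; rewrite ln_div ?posrE // mulrBr.
  have e2 : \sum_(I : {set 'I_m} | #|I| == n.+1) t I * (Y I / Pd mu - 1) = 0.
    rewrite (eq_bigr (fun I => t I * Y I / Pd mu - t I)) => [|I _]; last first.
      by rewrite mulrBr mulr1 mulrA.
    by rewrite sumrB -big_distrl /= -hQ divff ?gt_eqF // -Pt P1 subrr.
  have e3 : \sum_(I : {set 'I_m} | #|I| == n.+1) t I * ln (Y I) =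
            \sum_i c i * (ln (mu i) - ln (lam i)).
    rewrite (eq_bigr (fun I => \sum_i t I * (i \in I)%:R * ln (r i))) => [|I _]; last first.
      rewrite /Y ln_prodr => [|i _]; last exact: r0.
      rewrite big_distrr /= big_mkcond; apply: eq_bigr => i _.
      by case: (i \in I) => /=; rewrite ?mulr1 ?mulr0 ?mul0r.
    rewrite exchange_big /=; apply: eq_bigr => i _.
    by rewrite ct big_distrl /= /r ln_div ?posrE.
  have : \sum_i c i * (ln (mu i) - ln (lam i)) <= ln (Pd mu).
    by rewrite -e3; move: hb; rewrite e1 e2; lra.
  have -> : \sum_i c i * (ln (mu i) - ln (lam i)) =
     \sum_i c i * ln (mu i) - \sum_i c i * ln (lam i).
    by rewrite -sumrB; apply: eq_bigr => i _; rewrite mulrBr.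
  lra.
rewrite /Dc; apply/eqP; rewrite eq_le; apply/andP; split.
  apply: lb_le_inf; first by exists (Bfun v c lam); exists lam.
  by move=> y [mu mu0 <-]; apply: key.
by apply: (ge_inf hlb); exists lam.
Qed.

End Helpers.


Theorem proposition4 (R : realType) (n m : nat) (v : 'I_m -> 'cV[R]_n)
  (c : 'I_m -> R) :
  (n <= m)%N ->
  (forall i, v i != 0) ->
  \rank (colmat v) = n ->
  (forall i, 0 < c i) ->
  \sum_(i < m) c i = n%:R ->
  (exists lam : 'I_m -> R, (forall i, 0 < lam i) /\ Bfun v c lam = Dc v c)
  <->
  (exists (t : {set 'I_m} -> R) (lam : 'I_m -> R),
      (forall i, 0 < lam i) /\
      (forall I : {set 'I_m}, #|I| = n -> 0 <= t I) /\
      (forall i, c i = \sum_(I : {set 'I_m} | #|I| == n) t I * (i \in I)%:R) /\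
      (forall I : {set 'I_m}, #|I| = n -> t I = dI v I * \prod_(i in I) lam i)).
Proof.
case: n v => [|n] v nm vn0 rk c0 csum; last exact: main_pos.
case: m v c nm vn0 rk c0 csum => [|m] v c nm vn0 rk c0 csum; last first.
  by move: (vn0 ord0); rewrite [v ord0]flatmx0 eqxx.
have B1 : forall lam, Bfun v c lam = 1.
  by move=> lam; rewrite /Bfun big_ord0 big_ord0 det_mx00 divr1.
split => _.
  exists (fun I => dI v I * \prod_(i in I) (fun _ => 1) i), (fun _ => 1).
  split; first by case.
  split; last by split; first by case.
  move=> I _; apply: mulr_ge0; first exact: dI_ge0.
  by apply: prodr_ge0.
exists (fun _ => 1); split; first by case.
rewrite /Dc B1.
set S := (X in inf X).
have -> : S = [set 1]%classic.
  apply/seteqP; split => y /=.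
    by move=> [lam _ <-]; rewrite B1.
  by move=> ->; exists (fun _ => 1) => //; case.
by rewrite inf1.
Qed.
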